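(* Let $s\ge2$, $n\ge1$, $m\ge1$, $i\ge1$, and let $j'\ge1$ be minimal such that $m\le a_{i,j'}$. If $i=1$, or if $i>1$ and $j'=1$, then \[ \lambda_s(n,m)\le 2^{s-1}n+j'^{\,s-2}(m-1). \]
   Context: For $s\ge1$, a sequence contains an alternation of length $s+2$ if there are distinct symbols $a\ne b$ and indices $i_1<\dots<i_{s+2}$ whose entries are alternately $a,b,a,b,\dots$. A block is a sequence of pairwise distinct symbols. $\lambda_s(n,m)$ is the maximum length of a sequence using at most $n$ distinct symbols that contains no alternation of length $s+2$ and can be written as a concatenation of at most $m$ blocks. Ackermann's function: $a_{1,j}=2^j$ ($j\ge1$), $a_{i,1}=2$ ($i\ge2$), $a_{i,j}=w\cdot a_{i-1,w}$ with $w=a_{i,j-1}$ ($i,j\ge2$). *)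

(* Defs.v *)
From mathcomp Require Import all_boot.
Set Implicit Arguments. Unset Strict Implicit. Unset Printing Implicit Defensive.

Definition alt_word (a b k : nat) : seq nat :=
  mkseq (fun t => if odd t then b else a) k.

Definition has_alternation (k : nat) (w : seq nat) : Prop :=
  exists a b : nat, a <> b /\ subseq (alt_word a b k) w.

Definition block (b : seq nat) : bool := uniq b.

Definition at_most_m_blocks (m : nat) (w : seq nat) : Prop :=
  exists bs : seq (seq nat), size bs <= m /\ all block bs /\ w = flatten bs.

Definition admissible (s n m : nat) (w : seq nat) : Prop :=
  size (undup w) <= n /\ ~ has_alternation s.+2 w /\ at_most_m_blocks m w.

(* lambda_s(n,m) <= B  iff every admissible sequence has length <= B
   (lambda_s(n,m) is the maximum of these lengths; the empty sequence
   is always admissible). *)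
Definition lambda_le (s n m B : nat) : Prop :=
  forall w : seq nat, admissible s n m w -> size w <= B.

(* Ackermann's function a_{i,j} (meaningful for i, j >= 1; other values junk):
   a_{1,j} = 2^j, a_{i,1} = 2, a_{i,j} = w * a_{i-1,w} with w = a_{i,j-1}. *)
Fixpoint ack (i : nat) : nat -> nat :=
  match i with
  | 0 => fun _ => 0
  | 1 => fun j => 2 ^ j
  | S ((S _) as i1) =>
      fix g (j : nat) : nat :=
        match j with
        | 0 => 0
        | 1 => 2
        | S j1 => let w := g j1 in w * ack i1 w
        end
  end.

Example ack_test : [/\ ack 1 3 = 8, ack 2 1 = 2, ack 2 2 = 8 & ack 3 2 = 2 * ack 2 2].
Proof. by []. Qed.

(* Main.v *)
Require Import Defs.
From mathcomp Require Import all_boot zify.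

Lemma alt_rcons a b k : alt_word a b k.+1 = rcons (alt_word a b k) (if odd k then b else a).
Proof. by rewrite /alt_word mkseqS. Qed.

Lemma alt_cons a b k : alt_word a b k.+1 = a :: alt_word b a k.
Proof.
rewrite /alt_word /mkseq /= -[1]addn0 iotaDl -map_comp; congr (_ :: _).
by apply: eq_map => t /=; case: (odd t).
Qed.

Lemma alt_mem (a b k : nat) : 2 <= k -> (a \in alt_word a b k) && (b \in alt_word a b k).
Proof.
case: k => [|[|k]] // _; rewrite !alt_cons !inE !eqxx /=; by rewrite orbT.
Qed.

Lemma has_alt_sub k u w : subseq u w -> has_alternation k u -> has_alternation k w.
Proof. by move=> su [a [b [ab h]]]; exists a, b; split=> //; apply: subseq_trans su. Qed.

Lemma blocks_filter (p : pred nat) m w : at_most_m_blocks m w -> at_most_m_blocks m (filter p w).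
Proof.
case=> bs [hs [hb ->]]; exists (map (filter p) bs); split; first by rewrite size_map.
split; last by rewrite filter_flatten.
rewrite all_map; apply/allP => b bin /=; rewrite /block filter_uniq //.
by move/allP: hb => /(_ b bin).
Qed.

Lemma undup_count (p : pred nat) u w : {subset u <= p} -> {subset u <= w} ->
  size (undup u) <= count p (undup w).
Proof.
move=> hp hw; rewrite -size_filter; apply: uniq_leq_size; first exact: undup_uniq.
by move=> x; rewrite mem_undup mem_filter mem_undup => xu; apply/andP; split; [apply: hp|apply: hw].
Qed.

Lemma count3 (a b c : pred nat) s : (forall x, a x + b x + c x <= 1) ->
  count a s + count b s + count c s <= size s.
Proof. move=> H; elim: s => //= x s IH; have := H x; lia. Qed.

Lemma key_alt k L R : 2 <= k -> ~ has_alternation k.+1 (L ++ R) ->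
  ~ has_alternation k [seq x <- L | (x \in L) && (x \in R)] /\
  ~ has_alternation k [seq x <- R | (x \in L) && (x \in R)].
Proof.
move=> k2 H; split=> -[a [b [ab hs]]]; apply: H.
- have /andP[ma mb] := alt_mem a b _ k2.
  have hc : (if odd k then b else a) \in R.
    have : (if odd k then b else a) \in [seq x <- L | (x \in L) && (x \in R)].
      by apply: (mem_subseq hs); case: (odd k).
    by rewrite mem_filter => /andP[/andP[]].
  exists a, b; split=> //; rewrite alt_rcons -cats1; apply: cat_subseq; last by rewrite sub1seq.
  exact: subseq_trans hs (filter_subseq _ _).
- have /andP[ma mb] := alt_mem a b _ k2.
  have hc : b \in L.
    by have := mem_subseq hs mb; rewrite mem_filter => /andP[/andP[]].
  exists b, a; split; first by apply/eqP; rewrite eq_sym; apply/eqP.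
  rewrite alt_cons -cat1s; apply: cat_subseq; first by rewrite sub1seq.
  exact: subseq_trans hs (filter_subseq _ _).
Qed.

Fixpoint adj (w : seq nat) : nat :=
  match w with
  | x :: ((y :: _) as t) => (x == y) + adj t
  | _ => 0
  end.

Lemma adj_cat_le u v : adj (u ++ v) <= adj u + adj v + 1.
Proof.
elim: u => [|x u IH]; first by simpl; lia.
case: u IH => [|y u] IH; first by case: v {IH} => [|z v] //=; case: (x == z) => /=; lia.
simpl in IH |- *; lia.
Qed.

Lemma adj_cat_ge u v : adj u + adj v <= adj (u ++ v).
Proof.
elim: u => [|x u IH] //.
case: u IH => [|y u] IH; first by case: v {IH} => [|z v] //=; lia.
simpl in IH |- *; lia.
Qed.

Lemma adj_dup u x v : adj (u ++ x :: x :: v) = (adj (u ++ x :: v)).+1.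
Proof.
elim: u => [|y u IH] /=; first by rewrite eqxx add1n.
by case: u IH => [|z u] IH; simpl in IH |- *; lia.
Qed.

Lemma adj_uniq w : uniq w -> adj w = 0.
Proof.
elim: w => [|x w IH] // /andP[xn u]; case: w IH xn u => [|y w] IH xn u //.
move: (IH u) => /= ->; rewrite addn0; case: eqP => // e; move: xn; rewrite e inE eqxx //.
Qed.

Lemma adj_flatten bs : all block bs -> adj (flatten bs) <= (size bs).-1.
Proof.
elim: bs => [|b bs IH] //= /andP[hb hbs].
case: bs IH hbs => [|c bs] IH hbs /=.
  by rewrite cats0 adj_uniq.
have := adj_cat_le b (flatten (c :: bs)); rewrite (@adj_uniq b hb).
have := IH hbs; rewrite [size _]/= [flatten (c :: bs)]/=; lia.
Qed.

Lemma adj_pos w : 0 < adj w -> exists u x v, w = u ++ x :: x :: v.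
Proof.
elim: w => [|x w IH] //=; case: w IH => [|y w] IH //=.
case: eqP => [<- _|_ /= h]; first by exists [::], x, w.
have [u [z [v ->]]] := IH h; by exists (x :: u), z, v.
Qed.

Lemma first_occ (x : nat) t : x \in t -> exists u v, t = u ++ x :: v /\ x \notin u.
Proof.
elim: t => [|y t IH] //; rewrite inE; case: eqP => [-> _|ne /= h].
  by exists [::], t.
have [u [v [-> hu]]] := IH h; exists (y :: u), v; split=> //.
by rewrite inE negb_or hu andbT; apply/eqP => e; apply: ne.
Qed.

Lemma alt4 (x y : nat) : alt_word x y 4 = [:: x; y; x; y].
Proof. by []. Qed.

Lemma single w : w <> [::] -> adj w = 0 -> ~ has_alternation 4 w ->
  exists y, count_mem y w = 1.
Proof.
move: {2}(size w) (leqnn (size w)) => N; elim: N w => [|N IH] [|x t] // hN _ ha hal.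
case xt: (x \in t); last first.
  by exists x; rewrite /= eqxx; move/negbT: xt => /count_memPn ->.
have [u [v [et xu]]] := first_occ _ _ xt.
case: u et xu => [|z u] et xu.
  by move: ha; rewrite et /= eqxx; lia.
have ew : x :: t = [:: x] ++ (z :: u) ++ (x :: v) by rewrite et.
have hsub : subseq (z :: u) (x :: t).
  by rewrite ew; apply: subseq_trans (suffix_subseq [:: x] _); apply: prefix_subseq.
have [y hy] : exists y, count_mem y (z :: u) = 1.
  apply: IH => //.
  - by move: hN; rewrite ew !size_cat /=; lia.
  - have h1 := adj_cat_ge [:: x] ((z :: u) ++ (x :: v)).
    have h2 := adj_cat_ge (z :: u) (x :: v).
    rewrite -ew ha in h1; lia.
  - by move=> h; apply: hal; apply: has_alt_sub h.
have yx : x != y.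
  by apply/eqP=> e; move: hy; rewrite -e; move/count_memPn: xu => ->.
have yu : y \in z :: u by rewrite -has_pred1 has_count hy.
have yv : y \notin v.
  apply/negP => yv; apply: hal; exists x, y; split; first by apply/eqP.
  rewrite alt4 ew -cat1s; apply: cat_subseq => //.
  rewrite -cat1s; apply: cat_subseq; first by rewrite sub1seq.
  by rewrite /= eqxx sub1seq.
have cv : count_mem y v = 0 by apply/count_memPn.
by exists y; rewrite ew !count_cat hy /= cv (negbTE yx).
Qed.

Lemma ds w : ~ has_alternation 4 w -> size w <= 2 * size (undup w) + adj w.
Proof.
move: {2}(size w) (leqnn (size w)) => N; elim: N w => [|N IH] w hN hal.
  by move: hN; rewrite leqn0 => /eqP ->.
case: (posnP (adj w)) => [a0|apos].
  case: w hN hal a0 => [|x t] // hN hal a0.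
  have [y hy] := single (x :: t) (fun e => ltac:(discriminate e)) a0 hal.
  have yw : y \in x :: t by rewrite -has_pred1 has_count hy.
  have [u [v [ew yu]]] := first_occ _ _ yw.
  have yv : y \notin v.
    apply/count_memPn; move: hy; rewrite ew count_cat /= eqxx.
    by move/count_memPn: yu => ->; lia.
  have sub : subseq (u ++ v) (x :: t).
    by rewrite ew; apply: cat_subseq => //; apply: subseq_cons.
  have IH' := IH (u ++ v).
  have hs : size (x :: t) = (size (u ++ v)).+1 by rewrite ew !size_cat /= addnS.
  have hu : (size (undup (u ++ v))).+1 <= size (undup (x :: t)).
    have -> : (size (undup (u ++ v))).+1 = size (y :: undup (u ++ v)) by [].
    apply: uniq_leq_size.
      by rewrite /= undup_uniq andbT mem_undup mem_cat negb_or yu yv.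
    move=> z; rewrite inE mem_undup => /orP[/eqP ->|]; first by rewrite mem_undup.
    by move=> zin; rewrite mem_undup; apply: (mem_subseq sub).
  have h1 := adj_cat_le u v.
  have h2 := adj_cat_ge u (y :: v).
  have h3 := adj_cat_ge [:: y] v.
  rewrite -ew a0 in h2.
  have := IH' ltac:(move: hN; rewrite hs; lia) ltac:(move=> h; apply: hal; exact: has_alt_sub sub h).
  change (adj [:: y]) with 0 in h3; change ([:: y] ++ v) with (y :: v) in h3; rewrite hs a0; lia.
have [u [x [v ew]]] := adj_pos w apos.
have sub : subseq (u ++ x :: v) w.
  rewrite ew; apply: cat_subseq; first exact: subseq_refl.
  exact: subseq_cons (x :: v) x.
have hs : size w = (size (u ++ x :: v)).+1 by rewrite ew !size_cat /= addnS.
have hu : size (undup (u ++ x :: v)) <= size (undup w).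
  apply: uniq_leq_size; first exact: undup_uniq.
  by move=> z; rewrite !mem_undup; apply: (mem_subseq sub).
have := IH (u ++ x :: v) ltac:(move: hN; rewrite hs; lia) ltac:(move=> h; apply: hal; exact: has_alt_sub sub h).
rewrite hs ew adj_dup -ew; lia.
Qed.

Definition Q s := forall j n m w, m <= 2 ^ j -> admissible s n m w ->
  size w <= 2 ^ (s - 1) * n + j ^ (s - 2) * (m - 1).

Lemma Q2 : Q 2.
Proof.
move=> j n m w hm [hn [hal [bs [hs [hb ew]]]]].
have h1 := ds _ hal; have h2 := adj_flatten _ hb; rewrite -ew in h2.
have -> : 2 ^ (2 - 1) = 2 by []. have -> : j ^ (2 - 2) = 1 by [].
lia.
Qed.

Lemma small m w : m <= 1 -> at_most_m_blocks m w -> uniq w.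
Proof.
move=> hm [[|b [|c bs]] [hs [hb ->]]] //=; last by move: hs => /=; lia.
by rewrite cats0; move: hb => /= /andP[].
Qed.

Lemma exp_mono j t : j ^ t <= j.+1 ^ t.
Proof. by elim: t => // t IH; rewrite !expnS leq_mul. Qed.

Lemma step t : Q t.+2 -> Q t.+3.
Proof.
rewrite /Q => Qs.
have Qs' : forall j n m w, m <= 2 ^ j -> admissible t.+2 n m w ->
  size w <= 2 ^ t.+1 * n + j ^ t * (m - 1).
  move=> j n m w hm ha; have := Qs j n m w hm ha.
  have -> : t.+2 - 1 = t.+1 by lia.
  by have -> : t.+2 - 2 = t by lia.
have -> : t.+3 - 1 = t.+2 by lia.
have -> : t.+3 - 2 = t.+1 by lia.
move=> j; elim: j => [|j IHj] n m w hm [hn [hal hbl]].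
  have := small _ _ hm hbl; move=> u; have {}hn : size w <= n by rewrite -(undup_id u).
  have := expn_gt0 2 t.+2; nia.
case: (leqP m 1) => [m1le|mgt].
  have := small _ _ m1le hbl; move=> u; have {}hn : size w <= n by rewrite -(undup_id u).
  have := expn_gt0 2 t.+2; nia.
case: hbl => bs [hs [hb ew]].
pose m1 := m %/ 2.
pose L := flatten (take m1 bs). pose R := flatten (drop m1 bs).
have ew' : w = L ++ R by rewrite ew /L /R -flatten_cat cat_take_drop.
have [hbt hbd] : all block (take m1 bs) /\ all block (drop m1 bs).
  by move: hb; rewrite -{1}(cat_take_drop m1 bs) all_cat => /andP.
have hbL : at_most_m_blocks m1 L.
  exists (take m1 bs); split=> //; rewrite size_take; case: ifP; lia.
have hbR : at_most_m_blocks (m - m1) R.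
  exists (drop m1 bs); split=> //; rewrite size_drop; lia.
have hm1 : m1 <= 2 ^ j by move: hm; rewrite expnS /m1; lia.
have hm2 : m - m1 <= 2 ^ j by move: hm; rewrite expnS /m1; lia.
pose pL := fun x => (x \in L) && (x \notin R).
pose pR := fun x => (x \in R) && (x \notin L).
pose pG := fun x => (x \in L) && (x \in R).
pose A1 := [seq x <- L | ~~ ((x \in L) && (x \in R))].
pose A2 := [seq x <- R | ~~ ((x \in L) && (x \in R))].
pose G1 := [seq x <- L | (x \in L) && (x \in R)].
pose G2 := [seq x <- R | (x \in L) && (x \in R)].
have hsz : size w = size A1 + size G1 + size A2 + size G2.
  rewrite ew' size_cat /A1 /A2 /G1 /G2 !size_filter.
  have h1 : count (fun x => ~~ ((x \in L) && (x \in R))) L + count (fun x => (x \in L) && (x \in R)) L = size L.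
    by rewrite addnC; exact: count_predC.
  have h2 : count (fun x => ~~ ((x \in L) && (x \in R))) R + count (fun x => (x \in L) && (x \in R)) R = size R.
    by rewrite addnC; exact: count_predC.
  lia.
have hcnt : count pL (undup w) + count pR (undup w) + count pG (undup w) <= n.
  apply: leq_trans hn; apply: count3 => x; rewrite /pL /pR /pG.
  by case: (x \in L); case: (x \in R).
have subL : subseq L w by rewrite ew'; apply: prefix_subseq.
have subR : subseq R w by rewrite ew'; apply: suffix_subseq.
have [kG1 kG2] := key_alt _ L R (isT : 2 <= t.+4) ltac:(by rewrite -ew').
have hA1 : size A1 <= 2 ^ t.+2 * count pL (undup w) + j ^ t.+1 * (m1 - 1).
  apply: IHj => //; split; last split.
  - apply: undup_count => x; rewrite mem_filter => /andP[h1 h2].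
      by rewrite /pL unfold_in /= h2; move: h1; rewrite h2 /=.
    by apply: (mem_subseq subL).
  - by move=> h; apply: hal; apply: has_alt_sub (subseq_trans (filter_subseq _ _) subL) h.
  - exact: blocks_filter.
have hA2 : size A2 <= 2 ^ t.+2 * count pR (undup w) + j ^ t.+1 * ((m - m1) - 1).
  apply: IHj => //; split; last split.
  - apply: undup_count => x; rewrite mem_filter => /andP[h1 h2].
      by rewrite /pR unfold_in /= h2 /=; move: h1; rewrite h2 andbT.
    by apply: (mem_subseq subR).
  - by move=> h; apply: hal; apply: has_alt_sub (subseq_trans (filter_subseq _ _) subR) h.
  - exact: blocks_filter.
have hG1 : size G1 <= 2 ^ t.+1 * count pG (undup w) + j ^ t * (m1 - 1).
  apply: Qs' => //; split; last split => //.
  - apply: undup_count => x; rewrite mem_filter => /andP[h1 h2] //.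
    by apply: (mem_subseq subL).
  - exact: blocks_filter.
have hG2 : size G2 <= 2 ^ t.+1 * count pG (undup w) + j ^ t * ((m - m1) - 1).
  apply: Qs' => //; split; last split => //.
  - apply: undup_count => x; rewrite mem_filter => /andP[h1 h2] //.
    by apply: (mem_subseq subR).
  - exact: blocks_filter.
have hPQ : j ^ t.+1 + j ^ t <= j.+1 ^ t.+1.
  rewrite [j ^ t.+1]expnS [j.+1 ^ t.+1]expnS.
  have := exp_mono j t; nia.
have e2 : 2 ^ t.+2 = 2 * 2 ^ t.+1 by rewrite expnS.
rewrite e2 in hA1 hA2 *.
set X := 2 ^ t.+1 in hA1 hA2 hG1 hG2 *.
set P := j ^ t.+1 in hA1 hA2 hPQ *.
set Qj := j ^ t in hG1 hG2 hPQ *.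
set T := j.+1 ^ t.+1 in hPQ *.
have ha : (P + Qj) * ((m1 - 1) + ((m - m1) - 1)) <= T * (m - 1).
  apply: leq_mul => //; rewrite /m1; lia.
have hb' : X * (count pL (undup w) + count pR (undup w) + count pG (undup w)) <= X * n.
  exact: leq_mul.
rewrite !mulnDr !mulnDl in ha hb'.
lia.
Qed.

Lemma Qall s : 2 <= s -> Q s.
Proof.
case: s => [|[|t]] // _; elim: t => [|t IH]; first exact: Q2.
exact: step.
Qed.

Theorem mainTheorem9 (s n m i j' : nat) :
  2 <= s -> 1 <= n -> 1 <= m -> 1 <= i ->
  1 <= j' -> m <= ack i j' ->
  (forall j, 1 <= j -> j < j' -> ack i j < m) ->
  (i = 1 \/ (1 < i /\ j' = 1)) ->
  lambda_le s n m (2 ^ (s - 1) * n + j' ^ (s - 2) * (m - 1)).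
Proof.
move=> s2 _ _ _ _ hm _ hi.
have hm2 : m <= 2 ^ j'.
  case: hi => [ei|[ii ej]]; first by move: hm; rewrite ei.
  by move: hm; rewrite ej; case: i ii => [|[|i]].
move=> w hw; exact: (Qall _ s2 j' n m w hm2 hw).
Qed.
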